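(* Let $L>0$, $N\in\mathbb{N}_+$, $h=L/N$, $\epsilon>0$, $\theta_0>0$, $\tau>0$, $\alpha\in(0,1)$, $\rho_u>0$, $\rho_w>0$, and let $u^n\in\mathcal{C}_{per}$ with $-1<u^n<1$ pointwise. Let $\{(u_1^{(k)},w_1^{(k)},u_2^{(k)},w_2^{(k)},u_3^{(k)},w_3^{(k)})\}_{k\ge0}$ be the sequence generated by Algorithm 1 (described in the context), and let $(u_1^*,w_1^*,u_2^*,w_2^*,u_3^*,w_3^* )$ be the stationary point of the Lagrange function $\mathcal{L}$ (described in the context). Then, as $k\to\infty$, $$\|u_i^{(k)}-u_i^*\|_2\to0\quad\text{and}\quad\|w_i^{(k)}-w_i^*\|_2\to0\qquad(i=1,2,3).$$
   Context: $\mathcal{C}_{per}$ is the space of real grid functions $\nu=(\nu_{i,j,k})_{i,j,k\in\mathbb{Z}}$ that are $N$-periodic in each index (values at cell centres of a uniform grid of mesh size $h$ on $(0,L)^3$). Inner product $\langle\nu,\xi\rangle=h^2\sum_{i,j,k=1}^N\nu_{i,j,k}\xi_{i,j,k}$, $\|\nu\|_2=\langle\nu,\nu\rangle^{1/2}$. Discrete Laplacian $(\Delta_h\nu)_{i,j,k}=h^{-2}(\nu_{i+1,j,k}+\nu_{i-1,j,k}+\nu_{i,j+1,k}+\nu_{i,j-1,k}+\nu_{i,j,k+1}+\nu_{i,j,k-1}-6\nu_{i,j,k})$; $\|\nabla_h\nu\|_2^2=\sum_{i,j,k=1}^N\big[(\nu_{i+1,j,k}-\nu_{i,j,k})^2+(\nu_{i,j+1,k}-\nu_{i,j,k})^2+(\nu_{i,j,k+1}-\nu_{i,j,k})^2\big]$.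 Operations and inequalities are pointwise; $1$ is the constant grid function. Lagrange function: $\mathcal{L}(u_1,w_1,u_2,w_2,u_3,w_3)=Z_1(u_1,w_1)+Z_2(u_2,w_2)+\langle u_3,u_1-u_2\rangle-\langle w_3,w_1-w_2\rangle$, with $Z_1(u,w)=\frac{\epsilon^2}{2}\|\nabla_hu\|_2^2-\alpha\langle u-u^n,w\rangle-\frac{\tau}{2}\|\nabla_hw\|_2^2$ and $Z_2(u,w)=\langle1+u,\log(1+u)\rangle+\langle1-u,\log(1-u)\rangle-\theta_0\langle u^n,u\rangle-(1-\alpha)\langle u-u^n,w\rangle$ (for $-1<u<1$). A stationary point is a tuple in $\mathcal{C}_{per}^6$ with $-1<u_2^*<1$ satisfying $-\epsilon^2\Delta_hu_1^*-\alpha w_1^*+u_3^*=0$, $\alpha(-u_1^*+u^n)+\tau\Delta_hw_1^*-w_3^*=0$, $\log(1+u_2^* )-\log(1-u_2^* )-\theta_0u^n-(1-\alpha)w_2^*-u_3^*=0$, $(1-\alpha)(-u_2^*+u^n)+w_3^*=0$, $u_1^*=u_2^*$, $w_1^*=w_2^*$. Algorithm 1: set $u_2^{(0)}=u^n$, $w_2^{(0)}=0$, $u_3^{(0)}=0$, $w_3^{(0)}=0$. For $k=0,1,2,\dots$: (i) find $u_1^{(k+1)},w_1^{(k+1)}\in\mathcal{C}_{per}$ solving $-\epsilon^2\Delta_hu_1^{(k+1)}-\alpha w_1^{(k+1)}+u_3^{(k)}+\rho_u(u_1^{(k+1)}-u_2^{(k)})=0$ and $\alpha(-u_1^{(k+1)}+u^n)+\tau\Delta_hw_1^{(k+1)}-w_3^{(k)}-\rho_w(w_1^{(k+1)}-w_2^{(k)})=0$;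 (ii) find $u_2^{(k+1)},w_2^{(k+1)}\in\mathcal{C}_{per}$ with $-1<u_2^{(k+1)}<1$ solving $\log(1+u_2^{(k+1)})-\log(1-u_2^{(k+1)})-\theta_0u^n-(1-\alpha)w_2^{(k+1)}-u_3^{(k)}-\rho_u(u_1^{(k+1)}-u_2^{(k+1)})=0$ and $(1-\alpha)(-u_2^{(k+1)}+u^n)+w_3^{(k)}+\rho_w(w_1^{(k+1)}-w_2^{(k+1)})=0$; (iii) set $u_3^{(k+1)}=u_3^{(k)}+\rho_u(u_1^{(k+1)}-u_2^{(k+1)})$, $w_3^{(k+1)}=w_3^{(k)}+\rho_w(w_1^{(k+1)}-w_2^{(k+1)})$. *)

(* Defs.v *)
From mathcomp Require Import all_boot all_order all_algebra.
From mathcomp Require Import all_classical all_reals all_analysis.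
Set Implicit Arguments. Unset Strict Implicit. Unset Printing Implicit Defensive.
Import Order.TTheory GRing.Theory Num.Theory.
Local Open Scope ring_scope.

(* N-periodic grid functions on Z^3 are represented by their values on one
   period, indexed by 'I_N x 'I_N x 'I_N; neighbour indices wrap around via
   ordS / ord_pred (i.e. i+1 and i-1 modulo N). *)
Definition grid (R : Type) (N : nat) := 'I_N -> 'I_N -> 'I_N -> R.

Section Grid.
Variables (R : realType) (N : nat).

Definition ginner (h : R) (u v : grid R N) : R :=
  h ^+ 2 * \sum_(i < N) \sum_(j < N) \sum_(k < N) (u i j k * v i j k).

Definition gnorm2 (h : R) (u : grid R N) : R := Num.sqrt (ginner h u u).

Definition gsub (u v : grid R N) : grid R N := fun i j k => u i j k - v i j k.

Definition glap (h : R) (u : grid R N) : grid R N := fun i j k =>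
  h ^- 2 * (u (ordS i) j k + u (ord_pred i) j k
          + u i (ordS j) k + u i (ord_pred j) k
          + u i j (ordS k) + u i j (ord_pred k) - 6 * u i j k).

End Grid.

(* Main.v *)
Require Import Defs.
From mathcomp Require Import all_boot all_order all_algebra.
From mathcomp Require Import all_classical all_reals all_analysis.
From mathcomp Require Import ring lra.
Import Order.TTheory GRing.Theory Num.Theory.
Local Open Scope classical_set_scope.
Local Open Scope ring_scope.
Import numFieldNormedType.Exports.
Set Implicit Arguments. Unset Strict Implicit.
Section Z.
Variable R : realType.
Definition Z (s : nat -> R) : Prop := s @ \oo --> 0.

Lemma ZD s t : Z s -> Z t -> Z (fun n => s n + t n).
Proof. move=> hs ht; have := cvgD hs ht; rewrite addr0; exact. Qed.
Lemma ZN s : Z s -> Z (fun n => - s n).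
Proof. move=> hs; have := cvgN hs; rewrite oppr0; exact. Qed.
Lemma ZM c s : Z s -> Z (fun n => c * s n).
Proof. move=> hs; have := cvgMl_tmp (a := c) hs; rewrite mulr0; exact. Qed.
Lemma ZMM s t : Z s -> Z t -> Z (fun n => s n * t n).
Proof. move=> hs ht; have := cvgM hs ht; rewrite mulr0; exact. Qed.
Lemma Zext s t : Z s -> (forall n, s n = t n) -> Z t.
Proof. by move=> h e; rewrite /Z -(funext e). Qed.
Lemma Zsq s : (forall n, 0 <= s n) -> Z (fun n => s n ^+ 2) -> Z s.
Proof.
move=> s0 hs. have := cvg_comp _ _ hs (@sqrt_continuous R 0).
rewrite sqrtr0 /=. apply: cvg_trans. apply: near_eq_cvg; near=> n. by rewrite /= sqrtr_sqr ger0_norm.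
Unshelve. all: end_near. Qed.
Lemma Zshift s k : Z (fun n => s (n + k)%N) -> Z s.
Proof. move=> h; rewrite /Z -(cvg_shiftn k s); exact: h. Qed.
Lemma Zsqueeze s t : (forall n, 0 <= s n <= t n) -> Z t -> Z s.
Proof. move=> h ht; apply: (@squeeze_cvgr _ _ _ _ (fun=> 0) t) => //.
 by near=> n; apply: h. exact: cvg_cst.
Unshelve. all: end_near. Qed.
Lemma Zsqrt t : Z t -> Z (fun n => Num.sqrt (t n)).
Proof. move=> hs. have := cvg_comp _ _ hs (@sqrt_continuous R 0). by rewrite sqrtr0. Qed.
Lemma Zln (y : nat -> R) y0 : 0 < y0 -> Z (fun n => y n - y0) -> Z (fun n => ln (y n) - ln y0).
Proof.
move=> y00 hy. apply/subr_cvg0. move/subr_cvg0: hy => hy.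
exact: (cvg_comp _ _ hy (continuous_ln y00)).
Qed.
Lemma Zbig (I : finType) (f : I -> nat -> R) : (forall p, Z (f p)) -> Z (fun n => \sum_(p : I) f p n).
Proof.
move=> hf. have e : \sum_(p : I) (0:R) = 0 by rewrite big1.
rewrite /Z. have := (@cvg_big R I +%R 0 (fun=> true) add_continuous nat \oo (index_enum I) (fun p n => f p n) (fun=> 0) _ (fun p _ => hf p)).
rewrite e; apply.
Qed.
Lemma Zabs s : Z (fun n => `|s n|) -> Z s.
Proof.
move=> hs.
have hn : Z (fun n => - `|s n|) by apply: ZN.
apply: (@squeeze_cvgr _ _ _ _ (fun n => - `|s n|) (fun n => `|s n|) s _ 0 hn hs).
by apply: nearW => n; rewrite -ler_norml.
Qed.
Lemma Zsq2 s : Z (fun n => s n ^+ 2) -> Z s.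
Proof. move=> hs; apply: Zabs; have := Zsqrt hs => /Zext; apply => n /=; exact: sqrtr_sqr. Qed.
Lemma Zsh1 s : Z (fun m => s m.+1) -> Z s.
Proof. move=> hs; apply: (Zshift (k := 1)). move: hs => /Zext; apply => n; by rewrite addn1. Qed.
Lemma Zsh2 s : Z (fun m => s m.+2) -> Z s.
Proof. move=> hs; apply: (Zshift (k := 2)). move: hs => /Zext; apply => n; by rewrite addn2. Qed.
Lemma Zfw1 s : Z s -> Z (fun m => s m.+1).
Proof. move=> hs. rewrite /Z -(cvg_shiftn 1) in hs. move: hs => /Zext; apply => n /=; by rewrite addn1. Qed.
Lemma Zfw2 s : Z s -> Z (fun m => s m.+2).
Proof. move=> hs. rewrite /Z -(cvg_shiftn 2) in hs. move: hs => /Zext; apply => n /=; by rewrite addn2. Qed.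
End Z.

Section S.
Variables (R : realType) (N : nat).
Definition S (f : grid R N) : R := \sum_(p : 'I_N * ('I_N * 'I_N)) f p.1 p.2.1 p.2.2.

Lemma S_ext f g : (forall i j k, f i j k = g i j k) -> S f = S g.
Proof. by move=> e; apply: eq_bigr => p _; rewrite e. Qed.
Lemma S_add f g : S (fun i j k => f i j k + g i j k) = S f + S g.
Proof. by rewrite /S big_split. Qed.
Lemma S_scale c f : S (fun i j k => c * f i j k) = c * S f.
Proof. by rewrite /S mulr_sumr. Qed.
Lemma S_le f g : (forall i j k, f i j k <= g i j k) -> S f <= S g.
Proof. by move=> e; apply: ler_sum => p _. Qed.
Lemma S_ge0 f : (forall i j k, 0 <= f i j k) -> 0 <= S f.
Proof. by move=> e; apply: sumr_ge0 => p _. Qed.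
Lemma S_term f i j k : (forall i j k, 0 <= f i j k) -> f i j k <= S f.
Proof.
move=> e; rewrite /S (bigD1 (i, (j, k))) //= lerDl.
by apply: sumr_ge0 => p _.
Qed.
Lemma S_inner h u v : ginner h u v = h ^+ 2 * S (fun i j k => u i j k * v i j k).
Proof.
rewrite /ginner /S; congr (_ * _).
under eq_bigr => i _ do rewrite pair_big.
by rewrite pair_big.
Qed.

Lemma S_reindex (t : 'I_N * ('I_N * 'I_N) -> 'I_N * ('I_N * 'I_N)) f :
  injective t ->
  S (fun i j k => f (t (i, (j, k))).1 (t (i, (j, k))).2.1 (t (i, (j, k))).2.2) = S f.
Proof. move=> it. rewrite /S [RHS](reindex_inj it) /=. by apply: eq_bigr => -[i [j k]]. Qed.

Lemma cross_le f g : S (fun i j k => f i j k * g i j k) <=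
   2^-1 * S (fun i j k => f i j k ^+ 2) + 2^-1 * S (fun i j k => g i j k ^+ 2).
Proof.
rewrite -!S_scale -S_add; apply: S_le => i j k.
have := sqr_ge0 (f i j k - g i j k). lra.
Qed.

Lemma lap_nonpos h u : S (fun i j k => glap h u i j k * u i j k) <= 0.
Proof.
pose sq := S (fun i j k => u i j k ^+ 2).
have sh : forall t, injective t ->
  S (fun i j k => u (t (i, (j, k))).1 (t (i, (j, k))).2.1 (t (i, (j, k))).2.2 * u i j k) <= sq.
  move=> t it.
  apply: le_trans (cross_le _ _) _.
  rewrite (@S_reindex t (fun a b c => u a b c ^+ 2) it). rewrite /sq; lra.
have i1 : injective (fun p : 'I_N * ('I_N * 'I_N) => (ordS p.1, p.2)).
  by move=> [a b] [c d] /= /pair_equal_spec [/ordS_inj -> ->].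
have i2 : injective (fun p : 'I_N * ('I_N * 'I_N) => (ord_pred p.1, p.2)).
  by move=> [a b] [c d] /= /pair_equal_spec [/ord_pred_inj -> ->].
have i3 : injective (fun p : 'I_N * ('I_N * 'I_N) => (p.1, (ordS p.2.1, p.2.2))).
  by move=> [a [b b']] [c [d d']] /= /pair_equal_spec [-> /pair_equal_spec [/ordS_inj -> ->]].
have i4 : injective (fun p : 'I_N * ('I_N * 'I_N) => (p.1, (ord_pred p.2.1, p.2.2))).
  by move=> [a [b b']] [c [d d']] /= /pair_equal_spec [-> /pair_equal_spec [/ord_pred_inj -> ->]].
have i5 : injective (fun p : 'I_N * ('I_N * 'I_N) => (p.1, (p.2.1, ordS p.2.2))).
  by move=> [a [b b']] [c [d d']] /= /pair_equal_spec [-> /pair_equal_spec [-> /ordS_inj ->]].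
have i6 : injective (fun p : 'I_N * ('I_N * 'I_N) => (p.1, (p.2.1, ord_pred p.2.2))).
  by move=> [a [b b']] [c [d d']] /= /pair_equal_spec [-> /pair_equal_spec [-> /ord_pred_inj ->]].
have := sh _ i1; have := sh _ i2; have := sh _ i3; have := sh _ i4; have := sh _ i5; have := sh _ i6.
rewrite /=.
have -> : S (fun i j k => glap h u i j k * u i j k) = h ^- 2 * (
   S (fun i j k => u (ordS i) j k * u i j k) + S (fun i j k => u (ord_pred i) j k * u i j k)
 + S (fun i j k => u i (ordS j) k * u i j k) + S (fun i j k => u i (ord_pred j) k * u i j k)
 + S (fun i j k => u i j (ordS k) * u i j k) + S (fun i j k => u i j (ord_pred k) * u i j k)
 + (-6) * sq).
  rewrite -!S_add -S_scale -!S_add -S_scale; apply: S_ext => i j k; rewrite /glap; ring.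
move=> a1 a2 a3 a4 a5 a6.
apply: mulr_ge0_le0; first by rewrite invr_ge0 sqr_ge0.
lra.
Qed.
End S.

Section M.
Variable R : realType.
Lemma ln_diff_ge (a b : R) : 0 < a -> 0 < b -> a <= 2 -> b <= a -> (a - b) / 2 <= ln a - ln b.
Proof.
move=> a0 b0 a2 ba.
have e : ln b - ln a = ln (1 + (b / a - 1)).
  rewrite -ln_div ?posrE //; congr ln; ring.
have h1 : ln (1 + (b / a - 1)) <= b / a - 1.
  apply: le_ln1Dx. have : 0 < b / a by apply: divr_gt0. lra.
have h2 : (a - b) / 2 <= (a - b) / a.
  apply: ler_wpM2l; first lra.
  by rewrite lef_pV2 ?posrE.
have h3 : (a - b) / a = 1 - b / a by rewrite mulrBl divff ?gt_eqF.
lra.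
Qed.

Definition gf (z : R) := ln (1 + z) - ln (1 - z).

Lemma gmono_aux x y : -1 < x < 1 -> -1 < y < 1 -> y <= x -> x - y <= gf x - gf y.
Proof.
move=> /andP[x1 x2] /andP[y1 y2] yx; rewrite /gf.
have h1 := @ln_diff_ge (1 + x) (1 + y) ltac:(lra) ltac:(lra) ltac:(lra) ltac:(lra).
have h2 := @ln_diff_ge (1 - y) (1 - x) ltac:(lra) ltac:(lra) ltac:(lra) ltac:(lra).
lra.
Qed.

Lemma gmono x y : -1 < x < 1 -> -1 < y < 1 -> (x - y) ^+ 2 <= (gf x - gf y) * (x - y).
Proof.
move=> hx hy; case: (leP y x) => yx.
  rewrite expr2; apply: ler_wpM2r; [lra | exact: gmono_aux].
have h := @gmono_aux y x hy hx (ltW yx).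
have -> : (x - y) ^+ 2 = (y - x) * (y - x) by ring.
have -> : (gf x - gf y) * (x - y) = (gf y - gf x) * (y - x) by ring.
apply: ler_wpM2r; lra.
Qed.
End M.

Lemma key (R : realFieldType) (eps tau al ru rw a b c d p q po qo co d0 G Go La Lb: R) :
  ru != 0 -> rw != 0 ->
  eps^+2*La = -al*b + po + ru*(a - co) ->
  tau*Lb = al*a + qo + rw*(b - d0) ->
  G = (1-al)*d + po + ru*(a - c) ->
  qo + rw*(b-d) = (1-al)*c ->
  p = po + ru*(a-c) -> q = qo + rw*(b-d) ->
  Go = (1-al)*d0 + po ->
  qo = (1-al)*co ->
  (p^+2/ru + q^+2/rw + ru*c^+2 + rw*d^+2)
  + ((p-po)^+2/ru + (q-qo)^+2/rw + ru*(c-co)^+2 + rw*(d-d0)^+2 + 2*(c-co)*(G-Go) + 2*G*c)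
  = (po^+2/ru + qo^+2/rw + ru*co^+2 + rw*d0^+2) + 2*eps^+2*(La*a) + 2*tau*(Lb*b).
Proof.
move=> ru0 rw0 e1 e2 eG e4 ep eq eGo eqo.
have -> : 2*eps^+2*(La*a) = 2*(eps^+2*La)*a by ring.
have -> : 2*tau*(Lb*b) = 2*(tau*Lb)*b by ring.
rewrite e1 e2 eG ep eq eGo.
have e5 : rw * (b - d) = (1-al)*(c-co).
  move: e4; rewrite eqo => e4.
  by rewrite -(addKr ((1-al)*co) (rw*(b-d))) e4; ring.
have eb : b = d + (1-al)*(c-co)/rw by rewrite -e5; field.
rewrite eqo eb. field. by rewrite ru0 rw0.
Qed.

Theorem proposition4p3 (R : realType) (L : R) (N : nat)
  (eps theta0 tau alpha rho_u rho_w : R) (un : grid R N)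
  (u1 w1 u2 w2 u3 w3 : nat -> grid R N)
  (u1s w1s u2s w2s u3s w3s : grid R N) :
  0 < L -> (0 < N)%N ->
  0 < eps -> 0 < theta0 -> 0 < tau -> 0 < alpha -> alpha < 1 ->
  0 < rho_u -> 0 < rho_w ->
  (forall i j k, -1 < un i j k /\ un i j k < 1) ->
  let h := L / N%:R in
  (* stationary point of the Lagrange function *)
  (forall i j k, -1 < u2s i j k /\ u2s i j k < 1) ->
  (forall i j k, - eps ^+ 2 * glap h u1s i j k - alpha * w1s i j k + u3s i j k = 0) ->
  (forall i j k, alpha * (- u1s i j k + un i j k) + tau * glap h w1s i j k
                 - w3s i j k = 0) ->
  (forall i j k, ln (1 + u2s i j k) - ln (1 - u2s i j k) - theta0 * un i j k
                 - (1 - alpha) * w2s i j k - u3s i j k = 0) ->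
  (forall i j k, (1 - alpha) * (- u2s i j k + un i j k) + w3s i j k = 0) ->
  u1s = u2s -> w1s = w2s ->
  (* Algorithm 1: initialisation *)
  u2 0%N = un -> w2 0%N = (fun _ _ _ => 0) ->
  u3 0%N = (fun _ _ _ => 0) -> w3 0%N = (fun _ _ _ => 0) ->
  (* step (i) *)
  (forall n i j k,
     - eps ^+ 2 * glap h (u1 n.+1) i j k - alpha * w1 n.+1 i j k + u3 n i j k
     + rho_u * (u1 n.+1 i j k - u2 n i j k) = 0) ->
  (forall n i j k,
     alpha * (- u1 n.+1 i j k + un i j k) + tau * glap h (w1 n.+1) i j k
     - w3 n i j k - rho_w * (w1 n.+1 i j k - w2 n i j k) = 0) ->
  (* step (ii) *)
  (forall n i j k, -1 < u2 n.+1 i j k /\ u2 n.+1 i j k < 1) ->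
  (forall n i j k,
     ln (1 + u2 n.+1 i j k) - ln (1 - u2 n.+1 i j k) - theta0 * un i j k
     - (1 - alpha) * w2 n.+1 i j k - u3 n i j k
     - rho_u * (u1 n.+1 i j k - u2 n.+1 i j k) = 0) ->
  (forall n i j k,
     (1 - alpha) * (- u2 n.+1 i j k + un i j k) + w3 n i j k
     + rho_w * (w1 n.+1 i j k - w2 n.+1 i j k) = 0) ->
  (* step (iii) *)
  (forall n i j k,
     u3 n.+1 i j k = u3 n i j k + rho_u * (u1 n.+1 i j k - u2 n.+1 i j k)) ->
  (forall n i j k,
     w3 n.+1 i j k = w3 n i j k + rho_w * (w1 n.+1 i j k - w2 n.+1 i j k)) ->
  (((fun n => gnorm2 h (gsub (u1 n) u1s)) @ \oo --> 0) /\
      ((fun n => gnorm2 h (gsub (w1 n) w1s)) @ \oo --> 0) /\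
      ((fun n => gnorm2 h (gsub (u2 n) u2s)) @ \oo --> 0) /\
      ((fun n => gnorm2 h (gsub (w2 n) w2s)) @ \oo --> 0) /\
      ((fun n => gnorm2 h (gsub (u3 n) u3s)) @ \oo --> 0) /\
      ((fun n => gnorm2 h (gsub (w3 n) w3s)) @ \oo --> 0)).
Proof.
move=> L0 N0 eps0 th0 tau0 al0 al1 ru0 rw0 hun h hu2s s1 s2 s3 s4 e12 ew12
  i1 i2 i3 i4 st1 st2 b2 t1 t2 it1 it2.
subst u1s w1s.
pose A n : grid R N := fun i j k => u1 n i j k - u2s i j k.
pose B n : grid R N := fun i j k => w1 n i j k - w2s i j k.
pose C n : grid R N := fun i j k => u2 n i j k - u2s i j k.
pose D n : grid R N := fun i j k => w2 n i j k - w2s i j k.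
pose P n : grid R N := fun i j k => u3 n i j k - u3s i j k.
pose Q n : grid R N := fun i j k => w3 n i j k - w3s i j k.
pose G n : grid R N := fun i j k => gf (u2 n i j k) - gf (u2s i j k).
have lapL : forall (u v : grid R N) (i j k : 'I_N), glap h (fun a b c => u a b c - v a b c) i j k
    = glap h u i j k - glap h v i j k.
  by move=> u v i j k; rewrite /glap; ring.
have F1 : forall n i j k, eps ^+ 2 * glap h (A n.+1) i j k
    = - alpha * B n.+1 i j k + P n i j k + rho_u * (A n.+1 i j k - C n i j k).
  move=> n i j k; rewrite /A lapL; have := st1 n i j k; have := s1 i j k.
  rewrite /B /P /C; lra.
have F2 : forall n i j k, tau * glap h (B n.+1) i j k
    = alpha * A n.+1 i j k + Q n i j k + rho_w * (B n.+1 i j k - D n i j k).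
  move=> n i j k; rewrite /B lapL; have := st2 n i j k; have := s2 i j k.
  rewrite /A /Q /D; lra.
have F3 : forall n i j k, G n.+1 i j k
    = (1 - alpha) * D n.+1 i j k + P n i j k + rho_u * (A n.+1 i j k - C n.+1 i j k).
  move=> n i j k; have := t1 n i j k; have := s3 i j k.
  rewrite /G /gf /A /D /P /C; lra.
have F4 : forall n i j k, Q n i j k + rho_w * (B n.+1 i j k - D n.+1 i j k)
    = (1 - alpha) * C n.+1 i j k.
  move=> n i j k; have := t2 n i j k; have := s4 i j k.
  rewrite /B /D /Q /C; lra.
have F5 : forall n i j k, P n.+1 i j k = P n i j k + rho_u * (A n.+1 i j k - C n.+1 i j k).
  move=> n i j k; have := it1 n i j k; rewrite /P /A /C; lra.
have F6 : forall n i j k, Q n.+1 i j k = Q n i j k + rho_w * (B n.+1 i j k - D n.+1 i j k).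
  move=> n i j k; have := it2 n i j k; rewrite /Q /B /D; lra.
have F7 : forall n i j k, G n.+1 i j k = (1 - alpha) * D n.+1 i j k + P n.+1 i j k.
  move=> n i j k; rewrite F3 F5; ring.
have F8 : forall n i j k, Q n.+1 i j k = (1 - alpha) * C n.+1 i j k.
  move=> n i j k; rewrite F6 F4 //.
have ru0' : rho_u != 0 by rewrite gt_eqF.
have rw0' : rho_w != 0 by rewrite gt_eqF.
pose W n : grid R N := fun i j k => P n i j k ^+ 2 / rho_u + Q n i j k ^+ 2 / rho_w
   + rho_u * C n i j k ^+ 2 + rho_w * D n i j k ^+ 2.
pose Df m : grid R N := fun i j k =>
  (P m.+2 i j k - P m.+1 i j k) ^+ 2 / rho_u + (Q m.+2 i j k - Q m.+1 i j k) ^+ 2 / rho_w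
  + rho_u * (C m.+2 i j k - C m.+1 i j k) ^+ 2 + rho_w * (D m.+2 i j k - D m.+1 i j k) ^+ 2
  + 2 * (C m.+2 i j k - C m.+1 i j k) * (G m.+2 i j k - G m.+1 i j k)
  + 2 * G m.+2 i j k * C m.+2 i j k.
pose La m : grid R N := fun i j k => glap h (A m.+2) i j k * A m.+2 i j k.
pose Lb m : grid R N := fun i j k => glap h (B m.+2) i j k * B m.+2 i j k.
have ident : forall m i j k, W m.+2 i j k + Df m i j k
    = W m.+1 i j k + (2 * eps ^+ 2) * La m i j k + (2 * tau) * Lb m i j k.
  move=> m i j k.
  have := @key R eps tau alpha rho_u rho_w (A m.+2 i j k) (B m.+2 i j k) (C m.+2 i j k)
    (D m.+2 i j k) (P m.+2 i j k) (Q m.+2 i j k) (P m.+1 i j k) (Q m.+1 i j k)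
    (C m.+1 i j k) (D m.+1 i j k) (G m.+2 i j k) (G m.+1 i j k)
    (glap h (A m.+2) i j k) (glap h (B m.+2) i j k) ru0' rw0'
    (F1 _ _ _ _) (F2 _ _ _ _) (F3 _ _ _ _) (F4 _ _ _ _) (F5 _ _ _ _) (F6 _ _ _ _)
    (F7 _ _ _ _) (F8 _ _ _ _).
  rewrite /W /Df /La /Lb. lra.
have Sineq : forall m, S (W m.+2) + S (Df m) <= S (W m.+1).
  move=> m.
  have e : S (W m.+2) + S (Df m) = S (W m.+1) + (2*eps^+2) * S (La m) + (2*tau) * S (Lb m).
    rewrite -(S_add (W m.+2) (Df m)) -(S_scale (2*eps^+2) (La m)) -(S_scale (2*tau) (Lb m)).
    rewrite -(S_add (W m.+1)) -S_add. exact: S_ext (ident m).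
  have l1 : S (La m) <= 0 := lap_nonpos h (A m.+2).
  have l2 : S (Lb m) <= 0 := lap_nonpos h (B m.+2).
  have p1 : (2 * eps ^+ 2) * S (La m) <= 0.
    by apply: mulr_ge0_le0 => //; rewrite mulr_ge0 // sqr_ge0.
  have p2 : (2 * tau) * S (Lb m) <= 0.
    by apply: mulr_ge0_le0 => //; rewrite mulr_ge0 // ltW.
  lra.
have hb : forall n i j k, -1 < u2 n.+1 i j k < 1.
  by move=> n i j k; case: (b2 n i j k) => -> ->.
have hs : forall i j k, -1 < u2s i j k < 1.
  by move=> i j k; case: (hu2s i j k) => -> ->.
have gm : forall m i j k, (C m.+2 i j k - C m.+1 i j k) ^+ 2
    <= (G m.+2 i j k - G m.+1 i j k) * (C m.+2 i j k - C m.+1 i j k).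
  move=> m i j k; have := gmono (hb m.+1 i j k) (hb m i j k).
  rewrite /C /G.
  have -> : u2 m.+2 i j k - u2s i j k - (u2 m.+1 i j k - u2s i j k)
    = u2 m.+2 i j k - u2 m.+1 i j k by ring.
  have -> : gf (u2 m.+2 i j k) - gf (u2s i j k) - (gf (u2 m.+1 i j k) - gf (u2s i j k))
    = gf (u2 m.+2 i j k) - gf (u2 m.+1 i j k) by ring.
  by [].
have gc : forall n i j k, C n.+1 i j k ^+ 2 <= G n.+1 i j k * C n.+1 i j k.
  move=> n i j k; exact: gmono (hb n i j k) (hs i j k).
have Dp : forall m i j k, 0 <= Df m i j k /\ C m.+2 i j k ^+ 2 <= Df m i j k
   /\ (P m.+2 i j k - P m.+1 i j k) ^+ 2 / rho_u <= Df m i j k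
   /\ (Q m.+2 i j k - Q m.+1 i j k) ^+ 2 / rho_w <= Df m i j k
   /\ rho_u * (C m.+2 i j k - C m.+1 i j k) ^+ 2 <= Df m i j k
   /\ rho_w * (D m.+2 i j k - D m.+1 i j k) ^+ 2 <= Df m i j k.
  move=> m i j k.
  have n1 : 0 <= (P m.+2 i j k - P m.+1 i j k) ^+ 2 / rho_u by rewrite divr_ge0 ?sqr_ge0 ?ltW.
  have n2 : 0 <= (Q m.+2 i j k - Q m.+1 i j k) ^+ 2 / rho_w by rewrite divr_ge0 ?sqr_ge0 ?ltW.
  have n3 : 0 <= rho_u * (C m.+2 i j k - C m.+1 i j k) ^+ 2 by rewrite mulr_ge0 ?sqr_ge0 ?ltW.
  have n4 : 0 <= rho_w * (D m.+2 i j k - D m.+1 i j k) ^+ 2 by rewrite mulr_ge0 ?sqr_ge0 ?ltW.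
  have n5 := gm m i j k. have n6 := gc m.+1 i j k.
  have n7 : 0 <= (C m.+2 i j k - C m.+1 i j k) ^+ 2 by rewrite sqr_ge0.
  have n8 : 0 <= C m.+2 i j k ^+ 2 by rewrite sqr_ge0.
  rewrite /Df; lra.
pose V m := S (W m.+1).
have Vdec : forall m, V m.+1 + S (Df m) <= V m := Sineq.
have Dnn : forall m, 0 <= S (Df m).
  by move=> m; apply: S_ge0 => i j k; case: (Dp m i j k).
have Wnn : forall n i j k, 0 <= W n i j k.
  move=> n i j k; rewrite /W.
  have a1 : 0 <= P n i j k ^+ 2 / rho_u by rewrite divr_ge0 ?sqr_ge0 ?ltW.
  have a2 : 0 <= Q n i j k ^+ 2 / rho_w by rewrite divr_ge0 ?sqr_ge0 ?ltW.
  have a3 : 0 <= rho_u * C n i j k ^+ 2 by rewrite mulr_ge0 ?sqr_ge0 ?ltW.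
  have a4 : 0 <= rho_w * D n i j k ^+ 2 by rewrite mulr_ge0 ?sqr_ge0 ?ltW.
  lra.
have Vni : nonincreasing_seq V.
  apply/nonincreasing_seqP => m. have := Vdec m; have := Dnn m. lra.
have Vlb : has_lbound (range V).
  exists 0 => y [m _ <-]; apply: S_ge0 => i j k; exact: Wnn.
have cV := nonincreasing_cvgn Vni Vlb.
have cV1 : [sequence V (n + 1)%N]_n @ \oo --> inf (V @` setT) by rewrite cvg_shiftn.
have ZDf : Z (fun m => S (Df m)).
  apply: (Zsqueeze (t := fun m => V m - V (m + 1)%N)).
    move=> m; rewrite addn1; have := Vdec m; have := Dnn m; move=> a b; apply/andP; split; lra.
  have := cvgB cV cV1; rewrite subrr. exact.
have pt : forall (f : nat -> R) i j k, (forall m, 0 <= f m /\ f m <= Df m i j k) -> Z f.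
  move=> f i j k hf; apply: (Zsqueeze (t := fun m => S (Df m))) ZDf => m.
  case: (hf m) => a b; rewrite a /=; apply: le_trans b _.
  by apply: S_term => a' b' c'; case: (Dp m a' b' c').
have sqd : forall (f : nat -> R) c, 0 < c -> Z (fun m => f m ^+ 2 / c) -> Z f.
  move=> f c c0 H; apply: Zsq2; move: (ZM c H) => /Zext; apply => m; field.
  by rewrite gt_eqF.
have sqm : forall (f : nat -> R) c, 0 < c -> Z (fun m => c * f m ^+ 2) -> Z f.
  move=> f c c0 H; apply: Zsq2; move: (ZM c^-1 H) => /Zext; apply => m; field.
  by rewrite gt_eqF.
have C2 : forall i j k, Z (fun m => C m.+2 i j k).
  move=> i j k; apply: Zsq2; apply: (pt _ i j k) => m.
  case: (Dp m i j k) => _ [a _]; split => //; exact: sqr_ge0.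
have Cc : forall i j k, Z (fun m => C m i j k) by move=> i j k; apply: Zsh2; exact: C2.
have dP : forall i j k, Z (fun m => P m.+2 i j k - P m.+1 i j k).
  move=> i j k; apply: (sqd _ rho_u ru0); apply: (pt _ i j k) => m.
  case: (Dp m i j k) => _ [_ [a _]]; split => //; by rewrite divr_ge0 ?sqr_ge0 ?ltW.
have dQ : forall i j k, Z (fun m => Q m.+2 i j k - Q m.+1 i j k).
  move=> i j k; apply: (sqd _ rho_w rw0); apply: (pt _ i j k) => m.
  case: (Dp m i j k) => _ [_ [_ [a _]]]; split => //; by rewrite divr_ge0 ?sqr_ge0 ?ltW.
have dC : forall i j k, Z (fun m => C m.+2 i j k - C m.+1 i j k).
  move=> i j k; apply: (sqm _ rho_u ru0); apply: (pt _ i j k) => m.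
  case: (Dp m i j k) => _ [_ [_ [_ [a _]]]]; split => //; by rewrite mulr_ge0 ?sqr_ge0 ?ltW.
have A2 : forall i j k, Z (fun m => A m.+2 i j k).
  move=> i j k; move: (ZD (ZM rho_u^-1 (dP i j k)) (C2 i j k)) => /Zext; apply => m.
  rewrite (F5 m.+1 i j k); field; by rewrite gt_eqF.
have Ac : forall i j k, Z (fun m => A m i j k) by move=> i j k; apply: Zsh2; exact: A2.
have Qc : forall i j k, Z (fun m => Q m i j k).
  move=> i j k; apply: Zsh1; move: (ZM (1 - alpha) (Zfw1 (Cc i j k))) => /Zext; apply => m.
  by rewrite F8.
have Y2 : forall i j k, Z (fun m => B m.+2 i j k - D m.+2 i j k).
  move=> i j k; move: (ZM rho_w^-1 (dQ i j k)) => /Zext; apply => m.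
  rewrite (F6 m.+1 i j k); field; by rewrite gt_eqF.
have Gc : forall i j k, Z (fun m => G m i j k).
  move=> i j k.
  have z1 : Z (fun m => ln (1 + u2 m i j k) - ln (1 + u2s i j k)).
    apply: Zln; first by case: (hu2s i j k) => a b; lra.
    move: (Cc i j k) => /Zext; apply => m; rewrite /C; ring.
  have z2 : Z (fun m => ln (1 - u2 m i j k) - ln (1 - u2s i j k)).
    apply: Zln; first by case: (hu2s i j k) => a b; lra.
    move: (ZN (Cc i j k)) => /Zext; apply => m; rewrite /C; ring.
  move: (ZD z1 (ZN z2)) => /Zext; apply => m; rewrite /G /gf; ring.
have LA : forall i j k, Z (fun m => glap h (A m.+2) i j k).
  move=> i j k. have Af : forall a b c, Z (fun m => A m.+2 a b c) := A2.
  move: (ZM (h ^- 2) (ZD (ZD (ZD (ZD (ZD (ZD (Af (ordS i) j k) (Af (ord_pred i) j k))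
     (Af i (ordS j) k)) (Af i (ord_pred j) k)) (Af i j (ordS k))) (Af i j (ord_pred k)))
     (ZM (-6) (Af i j k)))) => /Zext; apply => m; rewrite /glap; ring.
have X2 : forall i j k, Z (fun m => alpha * B m.+2 i j k - P m.+2 i j k).
  move=> i j k; move: (ZD (ZM (- eps ^+ 2) (LA i j k)) (ZM rho_u (dC i j k))) => /Zext.
  apply => m; have := F1 m.+1 i j k; have := F5 m.+1 i j k. lra.
have B2 : forall i j k, Z (fun m => B m.+2 i j k).
  move=> i j k; move: (ZD (ZD (X2 i j k) (Zfw2 (Gc i j k))) (ZM (1 - alpha) (Y2 i j k))) => /Zext.
  apply => m; have := F7 m.+1 i j k. lra.
have Bc : forall i j k, Z (fun m => B m i j k) by move=> i j k; apply: Zsh2; exact: B2.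
have D2 : forall i j k, Z (fun m => D m.+2 i j k).
  move=> i j k; move: (ZD (B2 i j k) (ZN (Y2 i j k))) => /Zext; apply => m; ring.
have Dc : forall i j k, Z (fun m => D m i j k) by move=> i j k; apply: Zsh2; exact: D2.
have P2 : forall i j k, Z (fun m => P m.+2 i j k).
  move=> i j k; move: (ZD (Zfw2 (Gc i j k)) (ZM (alpha - 1) (D2 i j k))) => /Zext.
  apply => m; have := F7 m.+1 i j k. lra.
have Pc : forall i j k, Z (fun m => P m i j k) by move=> i j k; apply: Zsh2; exact: P2.
have fin : forall (E : nat -> grid R N), (forall i j k, Z (fun n => E n i j k)) ->
    Z (fun n => gnorm2 h (E n)).
  move=> E hE.
  have : Z (fun n => Num.sqrt (h ^+ 2 * S (fun i j k => E n i j k * E n i j k))).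
    apply: Zsqrt; apply: ZM; rewrite /S.
    apply: (Zbig (f := fun p n => E n p.1 p.2.1 p.2.2 * E n p.1 p.2.1 p.2.2)) => p.
    by apply: ZMM; apply: hE.
  move/Zext; apply => n; by rewrite /gnorm2 S_inner.
split; first exact: (fin _ Ac).
split; first exact: (fin _ Bc).
split; first exact: (fin _ Cc).
split; first exact: (fin _ Dc).
split; first exact: (fin _ Pc).
exact: (fin _ Qc).
Qed.
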